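(* Consider the asynchronous network Newton method described in the context with stepsize $\varepsilon>0$, and let $t\ge2$. Then for every realization and every $y\in\mathbb{R}^n$, $$\big\|D(t-1)^{1/2}y\big\|\le\Big(1+C_1\|g(t-2)\|^{1/2}\Big)\big\|D(t-2)^{1/2}y\big\|,\qquad C_1=\left(\frac{\varepsilon\alpha L\Lambda}{2(1-\Delta)+\alpha m}\right)^{1/2}.$$
   Context: Setup. Let $n\ge 1$ be the number of agents and $\alpha>0$ a scalar. $W\in\mathbb{R}^{n\times n}$ is a symmetric nonnegative matrix with $W\mathbb{1}=\mathbb{1}$ (where $\mathbb{1}$ is the all-ones vector), $\mathrm{null}(I-W)=\mathrm{span}\{\mathbb{1}\}$, $0\le W_{ij}<1$ for all $i,j$, and $\delta\le W_{ii}\le\Delta$ for all $i$, for constants $0<\delta\le\Delta<1$. Each $f_i:\mathbb{R}\to\mathbb{R}$ is twice continuously differentiable with $0<m\le f_i''(s)\le M<\infty$ for all $s$ and $|f_i''(a)-f_i''(b)|\le L|a-b|$ for all $a,b$. Define $F(x)=\frac12 x^T(I-W)x+\alpha\sum_{i=1}^n f_i(x_i)$ for $x\in\mathbb{R}^n$, with minimum value $F^*$ and minimizer $x^*$. Let $g(x)=\nabla F(x)$, $G(x)=\mathrm{diag}(f_1''(x_1),\dots,f_n''(x_n))$, $H(x)=\nabla^2F(x)=I-W+\alpha G(x)$. Let $W_d$ be the diagonal matrix with $[W_d]_{ii}=W_{ii}$, and set $D(x)=\alpha G(x)+2(I-W_d)$ (diagonal, positive definite) and $B=I-2W_d+W$,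 so $H(x)=D(x)-B$. Define the approximate Hessian inverse $\hat H(x)^{-1}=D(x)^{-1/2}\big(I+D(x)^{-1/2}BD(x)^{-1/2}\big)D(x)^{-1/2}$. Constants: $\rho=\frac{2(1-\delta)}{2(1-\delta)+\alpha m}$, $\Lambda=\frac{1+\rho}{2(1-\Delta)+\alpha m}$, $\lambda=\frac{1}{2(1-\delta)+\alpha M}$. Algorithm (asynchronous network Newton). Given $x(0)\in\mathbb{R}^n$ and stepsize $\varepsilon>0$, let $\Phi(1),\Phi(2),\dots$ be i.i.d. random diagonal $n\times n$ matrices, each equal to $e_ie_i^T$ (the matrix with a single $1$ in position $(i,i)$ and zeros elsewhere) with probability $1/n$ for each $i=1,\dots,n$ (i.e., one uniformly random agent is active per iteration). The iterates are $x(t)=x(t-1)-\varepsilon\,\Phi(t)\hat H(x(t-1))^{-1}g(x(t-1))$, $t\ge1$. Write $g(t)=g(x(t))$, $D(t)=D(x(t))$, $H(t)=H(x(t))$, $\hat H(t)^{-1}=\hat H(x(t))^{-1}$. $\mathcal{F}_t$ denotes the $\sigma$-field generated by $\Phi(1),\dots,\Phi(t)$ (so $x(t)$ is $\mathcal{F}_t$-measurable). *)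

(* Defs.v *)
From Stdlib Require Import Reals Lra Lia.
Open Scope R_scope.

(* Vectors in R^n are functions nat -> R (only indices < n matter);
   n x n matrices are functions nat -> nat -> R. *)

Fixpoint rsum (n : nat) (f : nat -> R) : R :=
  match n with
  | O => 0
  | S k => rsum k f + f k
  end.

Definition kron (i j : nat) : R := if Nat.eqb i j then 1 else 0.

Definition vnorm (n : nat) (v : nat -> R) : R := sqrt (rsum n (fun i => v i ^ 2)).

Definition gradF (n : nat) (W : nat -> nat -> R) (alpha : R) (f1 : nat -> R -> R)
  (x : nat -> R) : nat -> R :=
  fun i => rsum n (fun j => (kron i j - W i j) * x j) + alpha * f1 i (x i).

Definition Ddiag (W : nat -> nat -> R) (alpha : R) (f2 : nat -> R -> R)
  (x : nat -> R) (i : nat) : R :=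
  alpha * f2 i (x i) + 2 * (1 - W i i).

Definition Bmat (W : nat -> nat -> R) (i j : nat) : R :=
  kron i j - 2 * kron i j * W i i + W i j.

(* hat H(x)^{-1} = D^{-1/2} (I + D^{-1/2} B D^{-1/2}) D^{-1/2}, entrywise *)
Definition Hinv (W : nat -> nat -> R) (alpha : R) (f2 : nat -> R -> R)
  (x : nat -> R) (i j : nat) : R :=
  / sqrt (Ddiag W alpha f2 x i) *
  (kron i j + / sqrt (Ddiag W alpha f2 x i) * Bmat W i j * / sqrt (Ddiag W alpha f2 x j)) *
  / sqrt (Ddiag W alpha f2 x j).

(* Iterates of the asynchronous network Newton method along a realization
   idx : nat -> nat, where Phi(t) = e_{idx t} e_{idx t}^T. *)
Fixpoint xiter (n : nat) (W : nat -> nat -> R) (alpha eps : R)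
  (f1 f2 : nat -> R -> R) (x0 : nat -> R) (idx : nat -> nat) (t : nat) : nat -> R :=
  match t with
  | O => x0
  | S s =>
      let xp := xiter n W alpha eps f1 f2 x0 idx s in
      fun k => xp k - eps * kron k (idx (S s)) *
               rsum n (fun j => Hinv W alpha f2 xp k j * gradF n W alpha f1 xp j)
  end.

(* Main.v *)
Require Import Defs.
From Stdlib Require Import Reals Lra Lia.
Open Scope R_scope.

Lemma rsum_le n f g : (forall i, (i<n)%nat -> f i <= g i) -> rsum n f <= rsum n g.
Proof. induction n; simpl; intros H. lra. apply Rplus_le_compat. apply IHn; intros; apply H; lia. apply H; lia. Qed.

Lemma rsum_ext n f g : (forall i, (i<n)%nat -> f i = g i) -> rsum n f = rsum n g.
Proof. induction n; simpl; intros H. lra. rewrite IHn, H. lra. lia. intros; apply H; lia. Qed.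

Lemma rsum_abs n f : Rabs (rsum n f) <= rsum n (fun i => Rabs (f i)).
Proof. induction n; simpl. rewrite Rabs_R0; lra.
 eapply Rle_trans. apply Rabs_triang. lra. Qed.

Lemma rsum_scal n c f : rsum n (fun i => c * f i) = c * rsum n f.
Proof. induction n; simpl. ring. rewrite IHn; ring. Qed.

Lemma rsum_plus n f g : rsum n (fun i => f i + g i) = rsum n f + rsum n g.
Proof. induction n; simpl. ring. rewrite IHn; ring. Qed.

Lemma rsum_kron_out n k a : (n <= k)%nat -> rsum n (fun j => kron k j * a j) = 0.
Proof. induction n; simpl; intros H. auto. rewrite IHn by lia. unfold kron.
 destruct (Nat.eqb_spec k n). lia. ring. Qed.

Lemma rsum_kron n k a : (k < n)%nat -> rsum n (fun j => kron k j * a j) = a k.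
Proof. induction n; simpl; intros H. lia.
 destruct (Nat.eq_dec k n). subst. rewrite rsum_kron_out by lia. unfold kron. rewrite Nat.eqb_refl. ring.
 rewrite IHn by lia. unfold kron. destruct (Nat.eqb_spec k n). lia. ring. Qed.

Lemma vnorm_comp n v k : (k < n)%nat -> Rabs (v k) <= vnorm n v.
Proof. intros Hk. rewrite <- sqrt_Rsqr_abs. unfold vnorm. apply sqrt_le_1_alt.
 replace (Rsqr (v k)) with (rsum n (fun j => kron k j * (v j ^ 2))).
 apply rsum_le. intros i _. unfold kron. destruct (Nat.eqb k i). nra. nra.
 rewrite (rsum_kron n k (fun j => v j ^ 2)) by auto. unfold Rsqr; ring. Qed.

Lemma vnorm_nonneg n v : 0 <= vnorm n v.
Proof. apply sqrt_pos. Qed.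

Lemma vnorm_scale_le n u v c : 0 <= c -> (forall i, (i<n)%nat -> Rabs (u i) <= c * Rabs (v i)) ->
  vnorm n u <= c * vnorm n v.
Proof. intros Hc H. unfold vnorm. rewrite <- (sqrt_Rsqr c) at 1 by auto.
 rewrite <- sqrt_mult_alt by apply Rle_0_sqr. apply sqrt_le_1_alt.
 rewrite <- rsum_scal. apply rsum_le. intros i Hi. specialize (H i Hi).
 rewrite <- (pow2_abs (u i)), <- (pow2_abs (v i)). unfold Rsqr.
 assert (0 <= Rabs (u i)) by apply Rabs_pos. assert (0 <= Rabs (v i)) by apply Rabs_pos.
 nra. Qed.

Lemma sqrt_plus_le a b : 0 <= a -> 0 <= b -> sqrt (a+b) <= sqrt a + sqrt b.
Proof. intros Ha Hb. assert (0 <= sqrt a) by apply sqrt_pos. assert (0 <= sqrt b) by apply sqrt_pos.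
 rewrite <- (sqrt_Rsqr (sqrt a + sqrt b)) by lra. apply sqrt_le_1_alt. unfold Rsqr.
 pose proof (sqrt_sqrt a Ha). pose proof (sqrt_sqrt b Hb). nra. Qed.

Lemma frac_mono u v a : 0 < a -> 0 <= u -> u <= v -> u/(2*u+a) <= v/(2*v+a).
Proof. intros Ha Hu Huv.
 replace (u/(2*u+a)) with (/2 - a/2 * /(2*u+a)) by (field; lra).
 replace (v/(2*v+a)) with (/2 - a/2 * /(2*v+a)) by (field; lra).
 apply Rplus_le_compat_l, Ropp_le_contravar, Rmult_le_compat_l. lra.
 apply Rinv_le_contravar; lra. Qed.

Lemma Rdiv_le_0_compat a b : 0 <= a -> 0 < b -> 0 <= a / b.
Proof. intros. unfold Rdiv. apply Rmult_le_pos. auto. left; apply Rinv_0_lt_compat; auto. Qed.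

Lemma Hinv_kk W alpha f2 z k : 0 < Ddiag W alpha f2 z k ->
  Hinv W alpha f2 z k k = / Ddiag W alpha f2 z k + (1 - W k k) / (Ddiag W alpha f2 z k * Ddiag W alpha f2 z k).
Proof. intros Hp. unfold Hinv, Bmat, kron. rewrite Nat.eqb_refl.
 pose proof (sqrt_sqrt _ (Rlt_le _ _ Hp)) as Hs. pose proof (sqrt_lt_R0 _ Hp).
 set (s := sqrt (Ddiag W alpha f2 z k)) in *. rewrite <- Hs. field. lra. Qed.

Lemma Hinv_kj W alpha f2 z k j : k <> j -> 0 < Ddiag W alpha f2 z k -> 0 < Ddiag W alpha f2 z j ->
  Hinv W alpha f2 z k j = W k j / (Ddiag W alpha f2 z k * Ddiag W alpha f2 z j).
Proof. intros Hkj Hp Hq. unfold Hinv, Bmat, kron. destruct (Nat.eqb_spec k j). lia.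
 pose proof (sqrt_sqrt _ (Rlt_le _ _ Hp)) as Hs. pose proof (sqrt_lt_R0 _ Hp).
 pose proof (sqrt_sqrt _ (Rlt_le _ _ Hq)) as Ht. pose proof (sqrt_lt_R0 _ Hq).
 set (s := sqrt (Ddiag W alpha f2 z k)) in *. set (s' := sqrt (Ddiag W alpha f2 z j)) in *.
 rewrite <- Hs, <- Ht. field. lra. Qed.

Lemma row_bound n W alpha f2 z k delta Delta m :
  (k < n)%nat -> 0 < alpha -> 0 < m -> delta <= Delta -> Delta < 1 ->
  (forall i j, (i < n)%nat -> (j < n)%nat -> 0 <= W i j < 1) ->
  (forall i, (i < n)%nat -> rsum n (fun j => W i j) = 1) ->
  (forall i, (i < n)%nat -> delta <= W i i <= Delta) ->
  (forall i, (i < n)%nat -> 2*(1 - W i i) + alpha*m <= Ddiag W alpha f2 z i) ->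
  rsum n (fun j => Rabs (Hinv W alpha f2 z k j)) <=
  (1 + 2 * (1 - delta) / (2 * (1 - delta) + alpha * m)) / (2 * (1 - Delta) + alpha * m).
Proof.
 intros Hk Ha Hm HdD HD HW HWr HWd HDd.
 set (d0 := 2 * (1 - Delta) + alpha * m).
 assert (Ham : 0 < alpha * m) by nra.
 assert (Hd0 : 0 < d0) by (unfold d0; lra).
 assert (Hge : forall i, (i<n)%nat -> d0 <= Ddiag W alpha f2 z i).
 { intros i Hi. specialize (HDd i Hi). specialize (HWd i Hi). unfold d0. lra. }
 set (dk := Ddiag W alpha f2 z k).
 assert (Hdk : d0 <= dk) by (apply Hge; auto).
 set (u := 1 - W k k).
 assert (Hu : 0 <= u) by (specialize (HW k k Hk Hk); unfold u; lra).
 set (A := / dk + u / (dk * dk)). set (B := / (dk * d0)).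
 eapply Rle_trans.
 { apply (rsum_le n _ (fun j => kron k j * A + (1 - kron k j) * (W k j * B))).
   intros j Hj. unfold kron. destruct (Nat.eqb_spec k j).
   - subst j. rewrite Hinv_kk by (fold dk; lra). fold dk. fold u.
     rewrite Rabs_right. unfold A; lra.
     assert (0 <= u / (dk*dk)) by (apply Rdiv_le_0_compat; nra).
     assert (0 < / dk) by (apply Rinv_0_lt_compat; lra). lra.
   - rewrite Hinv_kj by (auto; try (fold dk; lra); pose proof (Hge j Hj); lra).
     fold dk. pose proof (Hge j Hj). pose proof (HW k j Hk Hj).
     rewrite Rabs_right. unfold B. replace ((0 * A + (1 - 0) * (W k j * / (dk * d0)))) with (W k j * / (dk * d0)) by ring.
     unfold Rdiv. apply Rmult_le_compat_l. lra. apply Rinv_le_contravar. nra.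
     apply Rmult_le_compat_l; lra.
     apply Rle_ge, Rdiv_le_0_compat. lra. nra. }
 replace (rsum n (fun j => kron k j * A + (1 - kron k j) * (W k j * B)))
   with (rsum n (fun j => kron k j * A) + (rsum n (fun j => B * W k j) + (-1) * rsum n (fun j => kron k j * (B * W k j)))).
 2:{ rewrite <- !rsum_scal, <- !rsum_plus. apply rsum_ext. intros; ring. }
 rewrite (rsum_kron n k (fun _ => A)) by auto. rewrite (rsum_kron n k (fun j => B * W k j)) by auto.
 rewrite rsum_scal, HWr by auto.
 replace (A + (B * 1 + -1 * (B * W k k))) with (/dk + (u/dk) * /dk + (u/dk) * /d0)
   by (unfold A, B, u; field; lra).
 assert (h1 : / dk <= / d0) by (apply Rinv_le_contravar; lra).
 set (r := 2 * (1 - delta) / (2 * (1 - delta) + alpha * m)).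
 assert (h2 : u / dk <= r / 2).
 { apply Rle_trans with (u / (2*u + alpha*m)).
   unfold Rdiv. apply Rmult_le_compat_l. auto. apply Rinv_le_contravar. lra.
   specialize (HDd k Hk). fold dk in HDd. unfold u. lra.
   apply Rle_trans with ((1-delta)/(2*(1-delta)+alpha*m)).
   apply frac_mono; auto. specialize (HWd k Hk). unfold u; lra.
   unfold r. right. field. lra. }
 assert (0 <= u/dk) by (apply Rdiv_le_0_compat; lra).
 assert (0 < /dk) by (apply Rinv_0_lt_compat; lra).
 assert (0 < /d0) by (apply Rinv_0_lt_compat; lra).
 replace ((1 + r) / d0) with (/d0 + (r/2) * /d0 + (r/2) * /d0) by (field; lra).
 apply Rplus_le_compat. apply Rplus_le_compat. auto.
 apply Rmult_le_compat; lra. apply Rmult_le_compat_r; lra.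
Qed.

Theorem mainTheorem6
  (n : nat) (alpha : R) (W : nat -> nat -> R) (delta Delta : R)
  (f f1 f2 : nat -> R -> R) (m M L eps : R)
  (x0 : nat -> R) (idx : nat -> nat) :
  (1 <= n)%nat ->
  0 < alpha ->
  (* assumptions on W *)
  (forall i j, (i < n)%nat -> (j < n)%nat -> W i j = W j i) ->
  (forall i j, (i < n)%nat -> (j < n)%nat -> 0 <= W i j < 1) ->
  (forall i, (i < n)%nat -> rsum n (fun j => W i j) = 1) ->
  (forall v : nat -> R,
      (forall i, (i < n)%nat -> rsum n (fun j => (kron i j - W i j) * v j) = 0)
      <-> exists c : R, forall i, (i < n)%nat -> v i = c) ->
  0 < delta -> delta <= Delta -> Delta < 1 ->
  (forall i, (i < n)%nat -> delta <= W i i <= Delta) ->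
  (* assumptions on the f_i: C^2 with m <= f_i'' <= M, f_i'' L-Lipschitz *)
  (forall i s, (i < n)%nat -> derivable_pt_lim (f i) s (f1 i s)) ->
  (forall i s, (i < n)%nat -> derivable_pt_lim (f1 i) s (f2 i s)) ->
  (forall i, (i < n)%nat -> continuity (f2 i)) ->
  0 < m -> m <= M ->
  (forall i s, (i < n)%nat -> m <= f2 i s <= M) ->
  (forall i a b, (i < n)%nat -> Rabs (f2 i a - f2 i b) <= L * Rabs (a - b)) ->
  (* algorithm *)
  0 < eps ->
  (forall t, (idx t < n)%nat) ->
  let rho := 2 * (1 - delta) / (2 * (1 - delta) + alpha * m) in
  let Lambda := (1 + rho) / (2 * (1 - Delta) + alpha * m) in
  let C1 := sqrt (eps * alpha * L * Lambda / (2 * (1 - Delta) + alpha * m)) in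
  let x := xiter n W alpha eps f1 f2 x0 idx in
  forall (t : nat) (y : nat -> R), (2 <= t)%nat ->
    vnorm n (fun i => sqrt (Ddiag W alpha f2 (x (t - 1)%nat) i) * y i)
    <= (1 + C1 * sqrt (vnorm n (gradF n W alpha f1 (x (t - 2)%nat))))
       * vnorm n (fun i => sqrt (Ddiag W alpha f2 (x (t - 2)%nat) i) * y i).
Proof.
 intros Hn Ha HWs HW HWr Hnull Hd HdD HD HWd Hf Hf1 Hf2c Hm HmM Hf2 HL He Hidx rho Lambda C1 x t y Ht.
 destruct t as [|[|s]]; try lia.
 replace (S (S s) - 1)%nat with (S s) by lia. replace (S (S s) - 2)%nat with s by lia.
 set (xs := x s). set (k := idx (S s)).
 set (g := gradF n W alpha f1 xs). set (G := vnorm n g).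
 set (h := rsum n (fun j => Hinv W alpha f2 xs k j * g j)).
 assert (Hx' : x (S s) = fun i => xs i - eps * kron i k * rsum n (fun j => Hinv W alpha f2 xs i j * g j)) by reflexivity.
 set (d0 := 2 * (1 - Delta) + alpha * m).
 assert (Hk : (k < n)%nat) by apply Hidx.
 assert (Ham : 0 < alpha * m) by nra.
 assert (Hd0 : 0 < d0) by (unfold d0; lra).
 assert (HDd : forall z i, (i < n)%nat -> 2*(1 - W i i) + alpha*m <= Ddiag W alpha f2 z i).
 { intros z i Hi. unfold Ddiag. pose proof (Hf2 i (z i) Hi). nra. }
 assert (Hge : forall z i, (i<n)%nat -> d0 <= Ddiag W alpha f2 z i).
 { intros z i Hi. specialize (HDd z i Hi). specialize (HWd i Hi). unfold d0. lra. }
 assert (HL0 : 0 <= L).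
 { pose proof (HL 0%nat 1 0 ltac:(lia)). pose proof (Rabs_pos (f2 0%nat 1 - f2 0%nat 0)).
   replace (1 - 0) with 1 in H by ring. rewrite Rabs_R1 in H. lra. }
 assert (Hrho : 0 <= rho) by (unfold rho; apply Rdiv_le_0_compat; lra).
 assert (HLam : 0 < Lambda) by (unfold Lambda; apply Rdiv_lt_0_compat; lra).
 assert (HG : 0 <= G) by apply vnorm_nonneg.
 assert (Hhb : Rabs h <= Lambda * G).
 { unfold h. eapply Rle_trans. apply rsum_abs.
   eapply Rle_trans. apply (rsum_le n _ (fun j => G * Rabs (Hinv W alpha f2 xs k j))).
   intros j Hj. rewrite Rabs_mult, (Rmult_comm G). apply Rmult_le_compat_l. apply Rabs_pos.
   apply vnorm_comp; auto.
   rewrite rsum_scal, Rmult_comm. apply Rmult_le_compat_r. auto.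
   apply (row_bound n W alpha f2 xs k delta Delta m); auto. }
 set (c := 1 + C1 * sqrt G).
 assert (HC1 : 0 <= C1) by apply sqrt_pos.
 assert (Hc : 1 <= c) by (unfold c; pose proof (sqrt_pos G); nra).
 apply vnorm_scale_le. lra.
 intros i Hi. rewrite !Rabs_mult, (Rabs_right (sqrt _)), (Rabs_right (sqrt (Ddiag _ _ _ xs i)))
   by apply Rle_ge, sqrt_pos.
 rewrite <- Rmult_assoc. apply Rmult_le_compat_r. apply Rabs_pos.
 unfold Ddiag at 1. destruct (Nat.eq_dec i k).
 - subst i.
   assert (Hxk : x (S s) k = xs k - eps*h).
   { rewrite Hx'; cbv beta. unfold kron; rewrite Nat.eqb_refl. unfold h. ring. }
   rewrite Hxk. fold (Ddiag W alpha f2 xs k).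
   set (Dk := Ddiag W alpha f2 xs k).
   set (e := alpha * L * eps * (Lambda * G)).
   assert (He0 : 0 <= e) by (unfold e; apply Rmult_le_pos; [repeat apply Rmult_le_pos; lra | apply Rmult_le_pos; lra]).
   assert (HDk : d0 <= Dk) by (apply Hge; auto).
   assert (Hstep : alpha * f2 k (xs k - eps * h) + 2 * (1 - W k k) <= Dk + e).
   { unfold Dk, Ddiag. pose proof (HL k (xs k - eps*h) (xs k) Hk).
     replace (xs k - eps * h - xs k) with (- (eps*h)) in H by ring.
     rewrite Rabs_Ropp, Rabs_mult, (Rabs_right eps) in H by lra.
     pose proof (Rle_abs (f2 k (xs k - eps * h) - f2 k (xs k))).
     assert (f2 k (xs k - eps * h) - f2 k (xs k) <= L * eps * (Lambda * G)).
     { assert (L * (eps * Rabs h) <= L * eps * (Lambda * G)).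
       { rewrite <- Rmult_assoc. apply Rmult_le_compat_l. nra. auto. }
       lra. }
     unfold e. nra. }
   assert (HDk0 : 0 <= Dk) by lra.
   set (a := eps * alpha * L * Lambda / d0).
   assert (Ha0 : 0 <= a) by (unfold a; apply Rdiv_le_0_compat; [apply Rmult_le_pos; [repeat apply Rmult_le_pos; lra | lra] | lra]).
   assert (HC1a : C1 = sqrt a) by reflexivity.
   assert (Hea : e <= a * G * Dk).
   { replace (a * G * Dk) with (e * (Dk / d0)) by (unfold a, e; field; lra).
     assert (1 <= Dk / d0). { apply (Rmult_le_reg_r d0); auto. unfold Rdiv. rewrite Rmult_assoc, Rinv_l by lra. lra. }
     nra. }
   apply Rle_trans with (sqrt (Dk + e)). apply sqrt_le_1_alt. lra.
   eapply Rle_trans. apply sqrt_plus_le; lra.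
   assert (sqrt e <= C1 * sqrt G * sqrt Dk).
   { assert (0 <= a * G) by (apply Rmult_le_pos; auto). rewrite HC1a, <- !sqrt_mult_alt by auto. apply sqrt_le_1_alt. lra. }
   unfold c. lra.
 - assert (Hxi : x (S s) i = xs i).
   { rewrite Hx'; cbv beta. unfold kron. destruct (Nat.eqb_spec i k). lia. ring. }
   rewrite Hxi. fold (Ddiag W alpha f2 xs i). pose proof (sqrt_pos (Ddiag W alpha f2 xs i)). nra.
Qed.
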